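(* Let $B:[0,T]\to\mathbb R$ and $B_u:[0,T]\to\mathbb R$ be solutions of the constrained and unconstrained ODEs of the context, and let $\pi^\ast,\pi_u,\pi_M$ be as in the context. If $\rho=0$ or $\pi_M\in[\alpha,\beta]$, then $\pi^\ast(t)=\mathrm{Cap}(\pi_u(t),\alpha,\beta)$ for all $t\in[0,T]$.
   Context: Parameters: $T>0$; $\eta,\kappa,\sigma>0$; $\rho\in(-1,1)$; $b<1$, $b\ne0$; $K=[\alpha,\beta]$, $-\infty\le\alpha<\beta\le\infty$; $\delta_K(x)=-\alpha x\mathbf 1_{\{x>0\}}-\beta x\mathbf 1_{\{x<0\}}$. $B_-=\frac{(1-b)\alpha-\eta}\sigma$, $B_+=\frac{(1-b)\beta-\eta}\sigma$; $r_0=-\frac b{2(1-b)}\eta^2$, $r_1=\frac b{1-b}\eta\sigma\rho-\kappa$, $r_2=\sigma^2(1+\frac b{1-b}\rho^2)$. Constrained ODE: $B'(\tau)=-\kappa B+\frac12\sigma^2B^2+\frac12\frac b{1-b}\inf_{\lambda\in\mathbb R}(2(1-b)\delta_K(\lambda)+(\eta+\lambda+\sigma\rho B)^2)$, $B(0)=0$. Unconstrained ODE: $B_u'(\tau)=-r_0+r_1B_u+\frac12r_2B_u^2$, $B_u(0)=0$. $\lambda^\ast(B)=[(1-b)\alpha-(\eta+\sigma\rho B)]\mathbf 1_{\{\rho B<B_-\}}+[(1-b)\beta-(\eta+\sigma\rho B)]\mathbf 1_{\{\rho B>B_+\}}$; $\pi^\ast(t)=\frac1{1-b}(\eta+\lambda^\ast(B(T-t))+\sigma\rho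 B(T-t))$; $\pi_u(t)=\frac1{1-b}(\eta+\sigma\rho B_u(T-t))$; $\pi_M=\frac\eta{1-b}$; $\mathrm{Cap}(x,\alpha,\beta)=\alpha$ if $x<\alpha$, $x$ if $\alpha\le x\le\beta$, $\beta$ if $x>\beta$. *)

(* Defs.v *)
From Stdlib Require Import Reals.
From Coquelicot Require Import Coquelicot.
Open Scope R_scope.

Definition deltaK (alpha beta : Rbar) (x : R) : Rbar :=
  Rbar_plus
    (if Rlt_dec 0 x then Rbar_mult (Rbar_opp alpha) (Finite x) else Finite 0)
    (if Rlt_dec x 0 then Rbar_mult (Rbar_opp beta) (Finite x) else Finite 0).

Definition objK (eta sigma rho b : R) (alpha beta : Rbar) (B l : R) : Rbar :=
  Rbar_plus (Rbar_mult (Finite (2 * (1 - b))) (deltaK alpha beta l))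
            (Finite ((eta + l + sigma * rho * B) ^ 2)).

Definition infK (eta sigma rho b : R) (alpha beta : Rbar) (B : R) : Rbar :=
  Rbar_glb (fun y => exists l : R, y = objK eta sigma rho b alpha beta B l).

Definition rhsK (eta kappa sigma rho b : R) (alpha beta : Rbar) (B : R) : R :=
  - kappa * B + / 2 * sigma ^ 2 * B ^ 2
  + / 2 * (b / (1 - b)) * real (infK eta sigma rho b alpha beta B).

Definition r0 (eta b : R) : R := - (b / (2 * (1 - b))) * eta ^ 2.
Definition r1 (eta kappa sigma rho b : R) : R := b / (1 - b) * eta * sigma * rho - kappa.
Definition r2 (sigma rho b : R) : R := sigma ^ 2 * (1 + b / (1 - b) * rho ^ 2).

Definition rhsU (eta kappa sigma rho b : R) (Bu : R) : R :=
  - r0 eta b + r1 eta kappa sigma rho b * Bu + / 2 * r2 sigma rho b * Bu ^ 2.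

Definition solves_ODE (T : R) (F : R -> R) (f : R -> R) : Prop :=
  f 0 = 0 /\
  continuous_on (fun tau => 0 <= tau <= T) f /\
  (forall tau, 0 < tau < T -> is_derive f tau (F (f tau))).

Definition Bminus (eta sigma b : R) (alpha : Rbar) : Rbar :=
  Rbar_mult (Rbar_minus (Rbar_mult (Finite (1 - b)) alpha) (Finite eta)) (Finite (/ sigma)).
Definition Bplus (eta sigma b : R) (beta : Rbar) : Rbar :=
  Rbar_mult (Rbar_minus (Rbar_mult (Finite (1 - b)) beta) (Finite eta)) (Finite (/ sigma)).

(* lambda^*(B); when an indicator is 1 the corresponding bound is finite *)
Definition lambda_star (eta sigma rho b : R) (alpha beta : Rbar) (B : R) : R :=
  (if Rbar_lt_dec (Finite (rho * B)) (Bminus eta sigma b alpha)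
   then (1 - b) * real alpha - (eta + sigma * rho * B) else 0)
  + (if Rbar_lt_dec (Bplus eta sigma b beta) (Finite (rho * B))
     then (1 - b) * real beta - (eta + sigma * rho * B) else 0).

Definition pi_star (T eta sigma rho b : R) (alpha beta : Rbar) (B : R -> R) (t : R) : R :=
  / (1 - b) * (eta + lambda_star eta sigma rho b alpha beta (B (T - t))
               + sigma * rho * B (T - t)).

Definition pi_u (T eta sigma rho b : R) (Bu : R -> R) (t : R) : R :=
  / (1 - b) * (eta + sigma * rho * Bu (T - t)).

Definition pi_M (eta b : R) : R := eta / (1 - b).

Definition Cap (x : R) (alpha beta : Rbar) : R :=
  if Rbar_lt_dec (Finite x) alpha then real alpha
  else if Rbar_lt_dec beta (Finite x) then real beta
  else x.

(* Main.v *)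
Require Import Defs.
From Stdlib Require Import Reals.
From Coquelicot Require Import Coquelicot.
From Stdlib Require Import Lra Psatz Classical.
Open Scope R_scope.


Lemma mult_pos_pinf x : 0 < x -> Rbar_mult (Finite x) p_infty = p_infty.
Proof. intros H; unfold Rbar_mult, Rbar_mult'; destruct Rle_dec; [destruct Rle_lt_or_eq_dec|]; auto; lra. Qed.
Lemma mult_pos_minf x : 0 < x -> Rbar_mult (Finite x) m_infty = m_infty.
Proof. intros H; unfold Rbar_mult, Rbar_mult'; destruct Rle_dec; [destruct Rle_lt_or_eq_dec|]; auto; lra. Qed.
Lemma mult_pinf_pos x : 0 < x -> Rbar_mult p_infty (Finite x) = p_infty.
Proof. intros H; unfold Rbar_mult, Rbar_mult'; destruct Rle_dec; [destruct Rle_lt_or_eq_dec|]; auto; lra. Qed.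
Lemma mult_minf_pos x : 0 < x -> Rbar_mult m_infty (Finite x) = m_infty.
Proof. intros H; unfold Rbar_mult, Rbar_mult'; destruct Rle_dec; [destruct Rle_lt_or_eq_dec|]; auto; lra. Qed.

Lemma lt_div_iff z u s : 0 < s -> (z < u * / s <-> s * z < u).
Proof.
  intros Hs. split; intros H.
  - apply Rmult_lt_compat_l with (r := s) in H; auto.
    replace (s * (u * / s)) with u in H by (field; lra). lra.
  - apply Rmult_lt_reg_l with s; auto. replace (s * (u * / s)) with u by (field; lra). lra.
Qed.

Lemma gt_div_iff z u s : 0 < s -> (u * / s < z <-> u < s * z).
Proof.
  intros Hs. split; intros H.
  - apply Rmult_lt_compat_l with (r := s) in H; auto.
    replace (s * (u * / s)) with u in H by (field; lra). lra.
  - apply Rmult_lt_reg_l with s; auto. replace (s * (u * / s)) with u by (field; lra). lra.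
Qed.

Lemma lt_scale_iff w a k : 0 < k -> (k * w < k * a <-> w < a).
Proof. intros Hk; split; intros H; [apply Rmult_lt_reg_l with k|apply Rmult_lt_compat_l]; auto. Qed.

Lemma Bminus_iff eta sigma b alpha z : 0 < sigma -> b < 1 ->
  (Rbar_lt (Finite z) (Bminus eta sigma b alpha) <->
   Rbar_lt (Finite ((eta + sigma * z) / (1 - b))) alpha).
Proof.
  intros Hs Hb. unfold Bminus.
  assert (Hw : eta + sigma * z = (1 - b) * ((eta + sigma * z) / (1 - b))) by (field; lra).
  set (w := (eta + sigma * z) / (1 - b)) in *.
  destruct alpha as [a| |].
  - simpl. rewrite lt_div_iff by auto. split; intros; nra.
  - rewrite (mult_pos_pinf (1-b)) by lra. replace (Rbar_minus p_infty eta) with p_infty by reflexivity. rewrite mult_pinf_pos.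
    simpl; tauto. apply Rinv_0_lt_compat; auto.
  - rewrite (mult_pos_minf (1-b)) by lra. replace (Rbar_minus m_infty eta) with m_infty by reflexivity. rewrite mult_minf_pos.
    simpl; tauto. apply Rinv_0_lt_compat; auto.
Qed.

Lemma Bplus_iff eta sigma b beta z : 0 < sigma -> b < 1 ->
  (Rbar_lt (Bplus eta sigma b beta) (Finite z) <->
   Rbar_lt beta (Finite ((eta + sigma * z) / (1 - b)))).
Proof.
  intros Hs Hb. unfold Bplus.
  assert (Hw : eta + sigma * z = (1 - b) * ((eta + sigma * z) / (1 - b))) by (field; lra).
  set (w := (eta + sigma * z) / (1 - b)) in *.
  destruct beta as [a| |].
  - simpl. rewrite gt_div_iff by auto. split; intros; nra.
  - rewrite (mult_pos_pinf (1-b)) by lra. replace (Rbar_minus p_infty eta) with p_infty by reflexivity. rewrite mult_pinf_pos.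
    simpl; tauto. apply Rinv_0_lt_compat; auto.
  - rewrite (mult_pos_minf (1-b)) by lra. replace (Rbar_minus m_infty eta) with m_infty by reflexivity. rewrite mult_minf_pos.
    simpl; tauto. apply Rinv_0_lt_compat; auto.
Qed.

Lemma LS eta sigma rho b alpha beta x : 0 < sigma -> b < 1 -> Rbar_lt alpha beta ->
  / (1 - b) * (eta + lambda_star eta sigma rho b alpha beta x + sigma * rho * x)
  = Cap ((eta + sigma * rho * x) / (1 - b)) alpha beta.
Proof.
  intros Hs Hb Hab. unfold lambda_star, Cap.
  pose proof (Bminus_iff eta sigma b alpha (rho * x) Hs Hb) as E1.
  pose proof (Bplus_iff eta sigma b beta (rho * x) Hs Hb) as E2.
  replace (sigma * rho * x) with (sigma * (rho * x)) by ring.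
  set (w := (eta + sigma * (rho * x)) / (1 - b)).
  fold w in E1, E2.
  destruct (Rbar_lt_dec (Finite (rho * x)) (Bminus eta sigma b alpha)) as [H1|H1];
  destruct (Rbar_lt_dec (Bplus eta sigma b beta) (Finite (rho * x))) as [H2|H2];
  destruct (Rbar_lt_dec (Finite w) alpha) as [H3|H3];
  destruct (Rbar_lt_dec beta (Finite w)) as [H4|H4]; try tauto;
  rewrite E1 in H1; rewrite E2 in H2;
  destruct alpha as [a| |]; destruct beta as [c| |]; simpl in *; try tauto; try lra; idtac.
  all: unfold w; field; lra.
Qed.

Lemma mult_pinf_neg x : x < 0 -> Rbar_mult p_infty (Finite x) = m_infty.
Proof. intros H; unfold Rbar_mult, Rbar_mult'; destruct Rle_dec; [destruct Rle_lt_or_eq_dec|]; auto; lra. Qed.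
Lemma mult_minf_neg x : x < 0 -> Rbar_mult m_infty (Finite x) = p_infty.
Proof. intros H; unfold Rbar_mult, Rbar_mult'; destruct Rle_dec; [destruct Rle_lt_or_eq_dec|]; auto; lra. Qed.

Lemma Cap_spec w alpha beta : Rbar_lt alpha beta ->
  (Rbar_lt (Finite w) alpha /\ alpha = Finite (Cap w alpha beta)) \/
  (Rbar_lt beta (Finite w) /\ beta = Finite (Cap w alpha beta)) \/
  (Rbar_le alpha (Finite w) /\ Rbar_le (Finite w) beta /\ Cap w alpha beta = w).
Proof.
  intros Hab. unfold Cap.
  destruct (Rbar_lt_dec (Finite w) alpha) as [H1|H1];
  [|destruct (Rbar_lt_dec beta (Finite w)) as [H2|H2]];
  destruct alpha as [a| |]; destruct beta as [c| |]; simpl in *; try tauto; try lra;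
  right; right; repeat split; lra.
Qed.

Lemma Cap_in w alpha beta : Rbar_lt alpha beta ->
  Rbar_le alpha (Finite (Cap w alpha beta)) /\ Rbar_le (Finite (Cap w alpha beta)) beta.
Proof.
  intros Hab. destruct (Cap_spec w alpha beta Hab) as [[H1 H2]|[[H1 H2]|[H1 [H2 H3]]]].
  - rewrite <- H2. split; [apply Rbar_le_refl|]. apply Rbar_lt_le; exact Hab.
  - rewrite <- H2. split; [|apply Rbar_le_refl]. apply Rbar_lt_le; exact Hab.
  - rewrite H3; tauto.
Qed.

Lemma deltaK_lb alpha beta a l : Rbar_le alpha (Finite a) -> Rbar_le (Finite a) beta ->
  Rbar_le (Finite (- a * l)) (deltaK alpha beta l).
Proof.
  intros H1 H2. unfold deltaK.
  destruct (Rlt_dec 0 l) as [Hl|Hl]; destruct (Rlt_dec l 0) as [Hl'|Hl']; try lra.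
  - destruct alpha as [a0| |]; [simpl in *; nra | simpl in H1; tauto |].
    change (Rbar_opp m_infty) with p_infty. rewrite mult_pinf_pos by auto. simpl; auto.
  - destruct beta as [c| |]; [simpl in *; nra | | simpl in H2; tauto].
    change (Rbar_opp p_infty) with m_infty. rewrite mult_minf_neg by auto. simpl; auto.
  - simpl. assert (l = 0) by lra. subst. lra.
Qed.

Lemma deltaK_eq alpha beta a l :
  (0 < l -> alpha = Finite a) -> (l < 0 -> beta = Finite a) ->
  deltaK alpha beta l = Finite (- a * l).
Proof.
  intros H1 H2. unfold deltaK.
  destruct (Rlt_dec 0 l) as [Hl|Hl]; destruct (Rlt_dec l 0) as [Hl'|Hl']; try lra.
  - rewrite (H1 Hl). simpl. f_equal; ring.
  - rewrite (H2 Hl'). simpl. f_equal; ring.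
  - simpl. assert (l = 0) by lra. subst. f_equal; ring.
Qed.

Lemma obj_lb c u d X : 0 < c -> Rbar_le (Finite u) X ->
  Rbar_le (Finite (c * u + d)) (Rbar_plus (Rbar_mult (Finite c) X) (Finite d)).
Proof.
  intros Hc HX. destruct X as [x| |]; [simpl in *; nra| |simpl in HX; tauto].
  rewrite mult_pos_pinf by auto. simpl; auto.
Qed.

Lemma infK_closed eta sigma rho b alpha beta x : b < 1 -> Rbar_lt alpha beta ->
  real (infK eta sigma rho b alpha beta x) =
  (eta + sigma * rho * x) ^ 2
  - (eta + sigma * rho * x - (1 - b) * Cap ((eta + sigma * rho * x) / (1 - b)) alpha beta) ^ 2.
Proof.
  intros Hb Hab. unfold infK.
  set (y := eta + sigma * rho * x).
  set (a := Cap (y / (1 - b)) alpha beta).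
  set (v := y ^ 2 - (y - (1 - b) * a) ^ 2).
  rewrite (Rbar_is_glb_unique _ (Finite v)). reflexivity.
  destruct (Cap_in (y / (1 - b)) alpha beta Hab) as [Ha1 Ha2]. fold a in Ha1, Ha2.
  split.
  - intros z [l ->]. unfold objK.
    apply Rbar_le_trans with (Finite (2 * (1 - b) * (- a * l) + (eta + l + sigma * rho * x) ^ 2)).
    + change (v <= 2 * (1 - b) * (- a * l) + (eta + l + sigma * rho * x) ^ 2). unfold v.
      replace (2 * (1 - b) * (- a * l) + (eta + l + sigma * rho * x) ^ 2)
        with (y ^ 2 - (y - (1 - b) * a) ^ 2 + (y + l - (1 - b) * a) ^ 2) by (unfold y; ring).
      pose proof (pow2_ge_0 (y + l - (1 - b) * a)). lra.
    + apply obj_lb; [lra|]. apply deltaK_lb; auto.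
  - intros m Hm. apply Hm. exists ((1 - b) * a - y). unfold objK.
    assert (Hw : y = (1 - b) * (y / (1 - b))) by (field; lra).
    rewrite (deltaK_eq alpha beta a).
    + simpl. f_equal. unfold v. replace (eta + ((1 - b) * a - y) + sigma * rho * x) with ((1-b)*a) by (unfold y; ring).
      ring.
    + intros Hl. pose proof (Cap_spec (y / (1 - b)) alpha beta Hab) as CS; fold a in CS.
      destruct CS as [[H1 H2]|[[H1 H2]|[H1 [H2 H3]]]]; auto.
      * exfalso. destruct beta; simpl in *; try tauto. injection H2 as E. rewrite E in H1. nra.
      * exfalso. rewrite H3 in Hl. lra.
    + intros Hl. pose proof (Cap_spec (y / (1 - b)) alpha beta Hab) as CS; fold a in CS.
      destruct CS as [[H1 H2]|[[H1 H2]|[H1 [H2 H3]]]]; auto.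
      * exfalso. destruct alpha; simpl in *; try tauto. injection H2 as E. rewrite E in H1. nra.
      * exfalso. rewrite H3 in Hl. lra.
Qed.

Definition clampT (T x : R) := Rmax 0 (Rmin T x).

Lemma clamp_lip T x y : 0 <= T -> Rabs (clampT T y - clampT T x) <= Rabs (y - x).
Proof.
  intros HT. unfold clampT, Rmax, Rmin.
  repeat destruct Rle_dec; unfold Rabs; repeat destruct Rcase_abs; lra.
Qed.

Lemma clamp_in T x : 0 <= T -> 0 <= clampT T x <= T.
Proof. intros HT. unfold clampT, Rmax, Rmin. repeat destruct Rle_dec; lra. Qed.

Lemma clamp_id T x : 0 <= x <= T -> clampT T x = x.
Proof. intros HT. unfold clampT, Rmax, Rmin. repeat destruct Rle_dec; lra. Qed.

Lemma ext_cont T (f : R -> R) : 0 <= T -> continuous_on (fun tau => 0 <= tau <= T) f ->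
  forall x, continuity_pt (fun x => f (clampT T x)) x.
Proof.
  intros HT Hf x. apply continuity_pt_filterlim.
  apply (filterlim_comp _ _ _ (clampT T) f (locally x)
           (within (fun tau => 0 <= tau <= T) (locally (clampT T x)))).
  - intros P [eps HP]. exists eps. intros t Ht. apply HP.
    + unfold ball in *; simpl in *; unfold AbsRing_ball, abs, minus, plus, opp in *; simpl in *.
      pose proof (clamp_lip T x t HT). unfold Rminus in *. lra.
    + apply clamp_in; auto.
  - apply Hf. apply clamp_in; auto.
Qed.

Lemma ext_deriv T (f : R -> R) s (l : R) : 0 < s < T -> is_derive f s l ->
  is_derive (fun x => f (clampT T x)) s l.
Proof.
  intros Hs Hd. apply (is_derive_ext_loc f (fun x => f (clampT T x)) s l); auto.
  assert (Hd0 : 0 < Rmin (s - 0) (T - s)) by (apply Rmin_pos; lra).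
  exists (mkposreal _ Hd0). intros t Ht.
  unfold ball in Ht; simpl in Ht; unfold AbsRing_ball, abs, minus, plus, opp in Ht; simpl in Ht.
  pose proof (Rmin_l (s - 0) (T - s)). pose proof (Rmin_r (s - 0) (T - s)).
  rewrite clamp_id; auto.
  unfold Rabs in Ht; destruct Rcase_abs in Ht; lra.
Qed.

Lemma cont_pos g x : continuity_pt g x -> 0 < g x ->
  exists d, 0 < d /\ forall y, Rabs (y - x) < d -> 0 < g y.
Proof.
  intros Hc Hp. destruct (Hc (g x) Hp) as [d [Hd H]].
  exists d. split; auto. intros y Hy.
  destruct (Req_dec x y) as [<-|Hne]; auto.
  assert (Hdist : R_dist (g y) (g x) < g x).
  { apply H. split. split; [exact I| auto]. exact Hy. }
  unfold R_dist in Hdist. unfold Rabs in Hdist; destruct Rcase_abs in Hdist; lra.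
Qed.

Lemma decr_lemma f df a b x y :
  (forall t, continuity_pt f t) ->
  (forall s, a < s < b -> is_derive f s (df s)) ->
  (forall s, a <= s <= b -> df s <= 0) ->
  a <= x -> x <= y -> y <= b -> f y <= f x.
Proof.
  intros Hc Hd Hn Hx Hxy Hy.
  destruct (Req_dec x y) as [<-|Hne]; [lra|].
  destruct (MVT_gen f x y df) as [c [Hc1 Hc2]].
  - intros t Ht. rewrite Rmin_left in Ht by lra. rewrite Rmax_right in Ht by lra.
    apply Hd. lra.
  - intros; apply Hc.
  - rewrite Rmin_left in Hc1 by lra. rewrite Rmax_right in Hc1 by lra.
    assert (df c <= 0) by (apply Hn; lra). nra.
Qed.
Lemma sqexp_deriv (D : R -> R) d k s : is_derive D s d ->
  is_derive (fun t => D t * D t * exp (k * t)) s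
    (exp (k * s) * (2 * D s * d + k * (D s * D s))).
Proof.
  intros HD.
  assert (Hl : is_derive (fun t => k * t) s k).
  { auto_derive; auto; ring. }
  pose proof (is_derive_mult _ _ s _ _ (is_derive_mult _ _ s _ _ HD HD Rmult_comm)
     (is_derive_comp exp (fun t => k * t) s _ _ (is_derive_exp _) Hl) Rmult_comm) as H.
  unfold mult, plus, scal in H; simpl in H. unfold mult in H; simpl in H.
  revert H. match goal with |- is_derive _ _ ?v -> _ => replace v with (exp (k * s) * (2 * D s * d + k * (D s * D s))) by ring end. auto. Qed.

Lemma gronwall (D dD : R -> R) L a b c : 0 <= L ->
  (forall t, continuity_pt D t) ->
  (forall s, a < s < b -> is_derive D s (dD s)) ->
  (forall s, a <= s <= b -> Rabs (dD s) <= L * Rabs (D s)) ->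
  a <= c <= b -> D c = 0 -> forall s, a <= s <= b -> D s = 0.
Proof.
  intros HL Hc Hd Hb Hcab Hc0 s Hs.
  assert (Hcont : forall k t, continuity_pt (fun t => D t * D t * exp (k * t)) t).
  { intros k t. apply continuity_pt_mult. apply continuity_pt_mult; auto.
    apply (continuity_pt_comp (fun t => k * t) exp).
    - apply continuity_pt_mult; [apply continuity_pt_const; intros ? ?; auto|apply derivable_continuous_pt, derivable_pt_id].
    - apply derivable_continuous_pt, derivable_pt_exp. }
  assert (Hkey : forall t, a <= t <= b -> D t * dD t <= L * (D t * D t) /\ - (L * (D t * D t)) <= D t * dD t).
  { intros t Ht. pose proof (Hb t Ht). pose proof (Rabs_mult (D t) (dD t)).
    pose proof (Rabs_pos (D t)). pose proof (Rabs_pos (dD t)).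
    assert (Rabs (D t) * Rabs (dD t) <= Rabs (D t) * (L * Rabs (D t))) by (apply Rmult_le_compat_l; auto).
    assert (D t * D t = Rabs (D t) * Rabs (D t)) by (rewrite <- Rabs_mult; unfold Rabs; destruct Rcase_abs; nra).
    pose proof (Rle_abs (D t * dD t)). pose proof (Rabs_maj2 (D t * dD t)). nra. }
  assert (Hsq : forall k t, D t * D t * exp (k * t) = 0 -> D t = 0).
  { intros k t H. pose proof (exp_pos (k * t)).
    assert (D t * D t = 0) by (apply Rmult_eq_reg_r with (exp (k * t)); lra).
    nra. }
  destruct (Rle_dec c s) as [Hcs|Hcs].
  - apply (Hsq (-(2*L)) s). apply Rle_antisym.
    + assert (E : D c * D c * exp (-(2*L) * c) = 0) by (rewrite Hc0; ring).
      rewrite <- E.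
      apply (decr_lemma (fun t => D t * D t * exp (-(2*L) * t))
               (fun t => exp (-(2*L) * t) * (2 * D t * dD t + -(2*L) * (D t * D t))) a b); auto; try lra.
      * intros u Hu. apply sqexp_deriv; auto.
      * intros u Hu. destruct (Hkey u Hu). pose proof (exp_pos (-(2*L)*u)). nra.
    + pose proof (exp_pos (-(2*L)*s)). pose proof (Rle_0_sqr (D s)). unfold Rsqr in *. nra.
  - apply (Hsq (2*L) s). apply Rle_antisym.
    + assert (E : D c * D c * exp ((2*L) * c) = 0) by (rewrite Hc0; ring).
      rewrite <- E.
      assert (- (D c * D c * exp (2 * L * c)) <= - (D s * D s * exp (2 * L * s))); [|lra].
      apply (decr_lemma (fun t => - (D t * D t * exp ((2*L) * t)))
               (fun t => - (exp ((2*L) * t) * (2 * D t * dD t + (2*L) * (D t * D t)))) a b); auto; try lra.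
      * intros t. apply continuity_pt_opp. apply Hcont.
      * intros u Hu. apply (is_derive_opp (fun t => D t * D t * exp ((2*L) * t)) u (exp ((2*L) * u) * (2 * D u * dD u + (2*L) * (D u * D u)))). apply sqexp_deriv; auto.
      * intros u Hu. destruct (Hkey u Hu). pose proof (exp_pos ((2*L)*u)). nra.
    + pose proof (exp_pos ((2*L)*s)). pose proof (Rle_0_sqr (D s)). unfold Rsqr in *. nra.
Qed.

Lemma bounded_lemma (h : R -> R) T : 0 <= T -> (forall x, continuity_pt h x) ->
  exists M, forall s, 0 <= s <= T -> Rabs (h s) <= M.
Proof.
  intros HT Hc.
  destruct (continuity_ab_maj (fun x => Rabs (h x)) 0 T HT) as [m [Hm _]].
  - intros c _. apply (continuity_pt_comp h Rabs); auto. apply Rcontinuity_abs.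
  - exists (Rabs (h m)). auto.
Qed.

Lemma local_up (h F : R -> R) T r e :
  (forall x, continuity_pt h x) ->
  (forall s, 0 < s < T -> is_derive h s (F (h s))) ->
  continuity_pt F e -> h r = e -> 0 <= r -> 0 < F e ->
  exists d, 0 < d /\ forall tau, r < tau -> tau < r + d -> tau <= T -> e < h tau.
Proof.
  intros Hh Hd HF Hr Hr0 HFe.
  assert (Hc : continuity_pt (fun x => F (h x)) r).
  { apply (continuity_pt_comp h F); auto. rewrite Hr; auto. }
  destruct (cont_pos _ _ Hc) as [d [Hd0 Hpos]]; [rewrite Hr; auto|].
  exists d; split; auto. intros tau H1 H2 H3.
  destruct (MVT_gen h r tau (fun s => F (h s))) as [c [Hc1 Hc2]].
  - intros t Ht. rewrite Rmin_left in Ht by lra. rewrite Rmax_right in Ht by lra.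
    apply Hd. lra.
  - intros; apply Hh.
  - rewrite Rmin_left in Hc1 by lra. rewrite Rmax_right in Hc1 by lra.
    assert (0 < F (h c)) by (apply Hpos; unfold Rabs; destruct Rcase_abs; lra).
    nra.
Qed.

Lemma noreturn_up (h F : R -> R) T r0 e :
  (forall x, continuity_pt h x) ->
  (forall s, 0 < s < T -> is_derive h s (F (h s))) ->
  continuity_pt F e -> 0 < F e -> 0 <= r0 <= T -> e <= h r0 ->
  forall s, r0 <= s <= T -> e <= h s.
Proof.
  intros Hh Hd HF HFe Hr0 Her0 s Hs.
  destruct (Rle_lt_dec e (h s)) as [|Hlt]; auto. exfalso.
  set (A := fun tau => r0 <= tau <= s /\ e <= h tau).
  destruct (completeness A) as [r [Hub Hlub]].
  - exists s. intros t [Ht _]. lra.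
  - exists r0. split; auto; lra.
  assert (Hr0r : r0 <= r) by (apply Hub; split; auto; lra).
  assert (Hrs : r <= s) by (apply Hlub; intros t [Ht _]; lra).
  assert (Her : e <= h r).
  { destruct (Rle_lt_dec e (h r)) as [|Hlt2]; auto. exfalso.
    assert (Hc : continuity_pt (fun x => e - h x) r).
    { apply continuity_pt_minus; auto. apply continuity_pt_const; intros ? ?; auto. }
    destruct (cont_pos _ _ Hc) as [d [Hd0 Hpos]]; [lra|].
    destruct (Classical_Prop.classic (exists tau, A tau /\ r - d < tau)) as [[tau [[Ht1 Ht2] Ht3]]|Hn].
    + assert (tau <= r) by (apply Hub; split; auto).
      assert (0 < e - h tau) by (apply Hpos; unfold Rabs; destruct Rcase_abs; lra). lra.
    + assert (r <= r - d); [|lra]. apply Hlub. intros t Ht.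
      destruct (Rle_lt_dec t (r - d)); auto. exfalso; apply Hn; exists t; auto. }
  assert (Hrs' : r < s) by (destruct (Req_dec r s); [subst; lra|lra]).
  assert (Hloc : exists d, 0 < d /\ forall tau, r < tau -> tau < r + d -> tau <= T -> e < h tau).
  { destruct (Req_dec (h r) e) as [Heq|Hne].
    - apply (local_up h F T r e); auto. lra.
    - assert (Hc : continuity_pt (fun x => h x - e) r).
      { apply continuity_pt_minus; auto. apply continuity_pt_const; intros ? ?; auto. }
      destruct (cont_pos _ _ Hc) as [d [Hd0 Hpos]]; [lra|].
      exists d; split; auto. intros tau H1 H2 H3.
      assert (0 < h tau - e) by (apply Hpos; unfold Rabs; destruct Rcase_abs; lra). lra. }
  destruct Hloc as [d [Hd0 Hloc]].
  set (tau := Rmin (r + d / 2) s).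
  assert (Htau1 : r < tau) by (unfold tau; apply Rmin_glb_lt; lra).
  assert (Htau2 : tau <= r + d / 2) by apply Rmin_l.
  assert (Htau3 : tau <= s) by apply Rmin_r.
  assert (e < h tau) by (apply Hloc; lra).
  assert (tau <= r) by (apply Hub; split; [lra|lra]). lra.
Qed.

Lemma mirror_deriv (h F : R -> R) T :
  (forall s, 0 < s < T -> is_derive h s (F (h s))) ->
  (forall s, 0 < s < T -> is_derive (fun x => - h x) s ((fun y => - F (- y)) (- h s))).
Proof.
  intros Hd s Hs. simpl. rewrite Ropp_involutive.
  apply (is_derive_opp h s (F (h s))). auto.
Qed.

Lemma mirror_cont (F : R -> R) e : continuity_pt F e -> continuity_pt (fun y => - F (- y)) (- e).
Proof.
  intros H. apply continuity_pt_opp.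
  apply (continuity_pt_comp (fun y => - y) F).
  - apply continuity_pt_opp. apply derivable_continuous_pt, derivable_pt_id.
  - rewrite Ropp_involutive; auto.
Qed.

Lemma local_down (h F : R -> R) T r e :
  (forall x, continuity_pt h x) ->
  (forall s, 0 < s < T -> is_derive h s (F (h s))) ->
  continuity_pt F e -> h r = e -> 0 <= r -> F e < 0 ->
  exists d, 0 < d /\ forall tau, r < tau -> tau < r + d -> tau <= T -> h tau < e.
Proof.
  intros Hh Hd HF Hr Hr0 HFe.
  destruct (local_up (fun x => - h x) (fun y => - F (- y)) T r (- e)) as [d [Hd0 H]]; auto.
  - intros x. apply continuity_pt_opp; auto.
  - apply mirror_deriv; auto.
  - apply mirror_cont; auto.
  - rewrite Hr; auto.
  - rewrite Ropp_involutive; lra.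
  - exists d; split; auto. intros tau H1 H2 H3. specialize (H tau H1 H2 H3). lra.
Qed.

Lemma noreturn_down (h F : R -> R) T r0 e :
  (forall x, continuity_pt h x) ->
  (forall s, 0 < s < T -> is_derive h s (F (h s))) ->
  continuity_pt F e -> F e < 0 -> 0 <= r0 <= T -> h r0 <= e ->
  forall s, r0 <= s <= T -> h s <= e.
Proof.
  intros Hh Hd HF HFe Hr0 Her0 s Hs.
  assert (- e <= - h s); [|lra].
  apply (noreturn_up (fun x => - h x) (fun y => - F (- y)) T r0 (- e)); auto.
  - intros x. apply continuity_pt_opp; auto.
  - apply mirror_deriv; auto.
  - apply mirror_cont; auto.
  - rewrite Ropp_involutive; lra.
  - lra.
Qed.

Lemma closed_ge (f : R -> R) c s : continuity_pt f s -> 0 <= s ->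
  (forall u, 0 <= u < s -> c <= f u) -> c <= f 0 -> c <= f s.
Proof.
  intros Hc Hs H H0.
  destruct (Req_dec s 0) as [->|Hs0]; auto.
  destruct (Rle_lt_dec c (f s)) as [|Hlt]; auto. exfalso.
  assert (Hc' : continuity_pt (fun x => c - f x) s).
  { apply continuity_pt_minus; auto. apply continuity_pt_const; intros ? ?; auto. }
  destruct (cont_pos _ _ Hc') as [d [Hd0 Hpos]]; [lra|].
  set (u := Rmax 0 (s - d / 2)).
  assert (Hu1 : 0 <= u) by apply Rmax_l.
  assert (Hu2 : s - d / 2 <= u) by apply Rmax_r.
  assert (Hu3 : u < s) by (unfold u; apply Rmax_lub_lt; lra).
  assert (0 < c - f u) by (apply Hpos; unfold Rabs; destruct Rcase_abs; lra).
  specialize (H u (conj Hu1 Hu3)). lra.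
Qed.

Lemma closed_le (f : R -> R) c s : continuity_pt f s -> 0 <= s ->
  (forall u, 0 <= u < s -> f u <= c) -> f 0 <= c -> f s <= c.
Proof.
  intros Hc Hs H H0.
  assert (- c <= - f s); [|lra].
  apply (closed_ge (fun x => - f x)); auto.
  - apply continuity_pt_opp; auto.
  - intros u Hu; specialize (H u Hu); lra.
  - lra.
Qed.

Definition InK (alpha beta : Rbar) (x : R) := Rbar_le alpha (Finite x) /\ Rbar_le (Finite x) beta.

Lemma closed_InK alpha beta (f : R -> R) s : continuity_pt f s -> 0 <= s ->
  (forall u, 0 <= u < s -> InK alpha beta (f u)) -> InK alpha beta (f 0) -> InK alpha beta (f s).
Proof.
  intros Hc Hs H H0. destruct H0 as [H01 H02]. split.
  - destruct alpha as [a| |]; simpl in *; auto.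
    apply closed_ge; auto. intros u Hu; apply (H u Hu).
  - destruct beta as [a| |]; simpl in *; auto.
    apply closed_le; auto. intros u Hu; apply (H u Hu).
Qed.

Lemma Cap_top x alpha e : Rbar_lt alpha (Finite e) -> e <= x -> Cap x alpha (Finite e) = e.
Proof.
  intros H1 H2. unfold Cap.
  destruct (Rbar_lt_dec (Finite x) alpha) as [H3|H3].
  - exfalso. destruct alpha; simpl in *; auto; lra.
  - destruct (Rbar_lt_dec (Finite e) (Finite x)) as [H4|H4]; simpl in *; auto. lra.
Qed.

Lemma Cap_bot x beta e : Rbar_lt (Finite e) beta -> x <= e -> Cap x (Finite e) beta = e.
Proof.
  intros H1 H2. unfold Cap.
  destruct (Rbar_lt_dec (Finite x) (Finite e)) as [H3|H3]; simpl in *; auto.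
  destruct (Rbar_lt_dec beta (Finite x)) as [H4|H4].
  - exfalso. destruct beta; simpl in *; auto; lra.
  - lra.
Qed.

Lemma AT T alpha beta (G1 G2 p q : R -> R) A1 A2 :
  0 < T -> Rbar_lt alpha beta ->
  (forall x, continuity_pt p x) -> (forall x, continuity_pt q x) ->
  (forall s, 0 < s < T -> is_derive p s (G1 (p s))) ->
  (forall s, 0 < s < T -> is_derive q s (G2 (q s))) ->
  (forall x, continuity_pt G1 x) -> (forall x, continuity_pt G2 x) ->
  (forall x, InK alpha beta x -> G1 x = G2 x) ->
  (forall x y, G2 x - G2 y = (x - y) * (A1 + A2 * (x + y))) ->
  p 0 = q 0 -> InK alpha beta (p 0) -> G2 (p 0) <> 0 ->
  forall s, 0 <= s <= T -> Cap (p s) alpha beta = Cap (q s) alpha beta.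
Proof.
  intros HT Hab Hpc Hqc Hpd Hqd HG1 HG2 HG12 HLip H0 HK0 HG0.
  destruct (bounded_lemma p T) as [Mp HMp]; [lra|auto|].
  destruct (bounded_lemma q T) as [Mq HMq]; [lra|auto|].
  set (S := fun tau => 0 <= tau <= T /\ forall u, 0 <= u <= tau -> InK alpha beta (p u)).
  destruct (completeness S) as [ss [Hub Hlub]].
  - exists T. intros t [Ht _]. lra.
  - exists 0. split; [lra|]. intros u Hu. replace u with 0 by lra. auto.
  assert (Hss0 : 0 <= ss) by (apply Hub; split; [lra|]; intros u Hu; replace u with 0 by lra; auto).
  assert (HssT : ss <= T) by (apply Hlub; intros t [Ht _]; lra).
  assert (Hinlt : forall u, 0 <= u < ss -> InK alpha beta (p u)).
  { intros u Hu.
    destruct (classic (exists tau, S tau /\ u < tau)) as [[tau [[Ht1 Ht2] Ht3]]|Hn].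
    - apply Ht2; lra.
    - exfalso. assert (ss <= u); [|lra]. apply Hlub. intros t Ht.
      destruct (Rle_lt_dec t u); auto. exfalso; apply Hn; exists t; auto. }
  assert (Hin : forall u, 0 <= u <= ss -> InK alpha beta (p u)).
  { intros u Hu. destruct (Req_dec u ss) as [->|Hne].
    - apply closed_InK; auto.
    - apply Hinlt; lra. }
  assert (Heq : forall u, 0 <= u <= ss -> p u - q u = 0).
  { apply (gronwall (fun x => p x - q x) (fun x => G1 (p x) - G2 (q x))
             (Rabs A1 + Rabs A2 * (Mp + Mq)) 0 ss 0).
    - pose proof (Rabs_pos A1); pose proof (Rabs_pos A2).
      pose proof (HMp 0 ltac:(lra)); pose proof (Rabs_pos (p 0)).
      pose proof (HMq 0 ltac:(lra)); pose proof (Rabs_pos (q 0)). nra.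
    - intros t. apply continuity_pt_minus; auto.
    - intros s Hs. apply (is_derive_minus p q s (G1 (p s)) (G2 (q s))); [apply Hpd|apply Hqd]; lra.
    - intros s Hs. rewrite HG12 by (apply Hin; lra). rewrite HLip.
      rewrite Rabs_mult. rewrite Rmult_comm. apply Rmult_le_compat_r; [apply Rabs_pos|].
      pose proof (HMp s ltac:(lra)). pose proof (HMq s ltac:(lra)).
      eapply Rle_trans; [apply Rabs_triang|]. apply Rplus_le_compat_l.
      rewrite Rabs_mult. apply Rmult_le_compat_l; [apply Rabs_pos|].
      eapply Rle_trans; [apply Rabs_triang|]. lra.
    - lra.
    - lra. }
  intros s Hs.
  destruct (Req_dec ss T) as [HssT'|HssT'].
  { replace (q s) with (p s) by (pose proof (Heq s ltac:(lra)); lra). reflexivity. }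
  assert (Hlt : ss < T) by lra.
  set (e := p ss).
  assert (HKe : InK alpha beta e) by (apply Hin; lra).
  assert (HG1e : G1 e = G2 e) by auto.
  assert (Hqss : q ss = e) by (pose proof (Heq ss ltac:(lra)); unfold e; lra).
  assert (Hext : forall d, 0 < d -> (forall tau, ss < tau -> tau < ss + d -> tau <= T -> InK alpha beta (p tau)) -> False).
  { intros d Hd Hd'.
    set (tau0 := Rmin (ss + d / 2) T).
    assert (Ht1 : ss < tau0) by (unfold tau0; apply Rmin_glb_lt; lra).
    assert (Ht2 : tau0 <= ss + d / 2) by apply Rmin_l.
    assert (Ht3 : tau0 <= T) by apply Rmin_r.
    assert (tau0 <= ss); [|lra]. apply Hub. split; [lra|].
    intros u Hu. destruct (Rle_lt_dec u ss).
    - apply Hin; lra.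
    - apply Hd'; lra. }
  destruct (Rtotal_order (G2 e) 0) as [Hneg|[Hzero|Hpos]].
  - (* exits through alpha *)
    assert (Halpha : alpha = Finite e).
    { destruct (Rbar_le_lt_or_eq_dec alpha (Finite e) (proj1 HKe)) as [Hlt2|]; auto. exfalso.
      destruct (local_down p G1 T ss e) as [d1 [Hd1 Hl1]]; auto; try lra.
      assert (Hd2 : exists d2, 0 < d2 /\ forall tau, Rabs (tau - ss) < d2 -> Rbar_lt alpha (Finite (p tau))).
      { destruct alpha as [a| |]; simpl in Hlt2; try tauto.
        - assert (Hc : continuity_pt (fun x => p x - a) ss).
          { apply continuity_pt_minus; auto. apply continuity_pt_const; intros ? ?; auto. }
          destruct (cont_pos _ _ Hc) as [d [Hd0 Hp]]; [unfold e in Hlt2; lra|].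
          exists d; split; auto. intros tau Ht. specialize (Hp tau Ht). simpl. lra.
        - exists 1; split; [lra|]. intros; simpl; auto. }
      destruct Hd2 as [d2 [Hd2 Hl2]].
      apply (Hext (Rmin d1 d2)). apply Rmin_glb_lt; auto.
      intros tau H1 H2 H3.
      pose proof (Rmin_l d1 d2). pose proof (Rmin_r d1 d2).
      split.
      - apply Rbar_lt_le. apply Hl2. unfold Rabs; destruct Rcase_abs; lra.
      - assert (p tau < e) by (apply Hl1; lra).
        apply Rbar_le_trans with (Finite e); [simpl; lra|exact (proj2 HKe)]. }
    assert (Hbe : Rbar_lt (Finite e) beta) by (rewrite <- Halpha; auto).
    destruct (Rle_lt_dec s ss).
    + replace (q s) with (p s) by (pose proof (Heq s ltac:(lra)); lra). reflexivity.
    + rewrite Halpha.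
      rewrite (Cap_bot (p s) beta e Hbe).
      rewrite (Cap_bot (q s) beta e Hbe); auto.
      * apply (noreturn_down q G2 T ss e); auto; lra.
      * apply (noreturn_down p G1 T ss e); auto; try lra. unfold e; lra.
  - (* equilibrium: contradiction *)
    exfalso. apply HG0.
    assert (Hc : forall u, 0 <= u <= ss -> p u - e = 0).
    { apply (gronwall (fun x => p x - e) (fun x => G1 (p x))
             (Rabs A1 + Rabs A2 * (Mp + Rabs e)) 0 ss ss).
      - pose proof (Rabs_pos A1); pose proof (Rabs_pos A2).
        pose proof (HMp 0 ltac:(lra)); pose proof (Rabs_pos (p 0)). pose proof (Rabs_pos e). nra.
      - intros t. apply continuity_pt_minus; auto. apply continuity_pt_const; intros ? ?; auto.
      - intros u Hu. replace (G1 (p u)) with (G1 (p u) - 0) by ring.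
        apply (is_derive_minus p (fun _ => e) u (G1 (p u)) 0); [apply Hpd; lra|exact (is_derive_const (K:=R_AbsRing) e u)].
      - intros u Hu. rewrite HG12 by (apply Hin; lra).
        replace (G2 (p u)) with (G2 (p u) - G2 e) by lra. rewrite HLip.
        rewrite Rabs_mult. rewrite Rmult_comm. apply Rmult_le_compat_r; [apply Rabs_pos|].
        pose proof (HMp u ltac:(lra)).
        eapply Rle_trans; [apply Rabs_triang|]. apply Rplus_le_compat_l.
        rewrite Rabs_mult. apply Rmult_le_compat_l; [apply Rabs_pos|].
        eapply Rle_trans; [apply Rabs_triang|]. lra.
      - lra.
      - unfold e; lra. }
    assert (p 0 = e) by (pose proof (Hc 0 ltac:(lra)); lra). rewrite H. auto.
  - (* exits through beta *)
    assert (Hbeta : beta = Finite e).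
    { destruct (Rbar_le_lt_or_eq_dec (Finite e) beta (proj2 HKe)) as [Hlt2|]; auto. exfalso.
      destruct (local_up p G1 T ss e) as [d1 [Hd1 Hl1]]; auto; try lra.
      assert (Hd2 : exists d2, 0 < d2 /\ forall tau, Rabs (tau - ss) < d2 -> Rbar_lt (Finite (p tau)) beta).
      { destruct beta as [a| |]; simpl in Hlt2; try tauto.
        - assert (Hc : continuity_pt (fun x => a - p x) ss).
          { apply continuity_pt_minus; auto. apply continuity_pt_const; intros ? ?; auto. }
          destruct (cont_pos _ _ Hc) as [d [Hd0 Hp]]; [unfold e in Hlt2; lra|].
          exists d; split; auto. intros tau Ht. specialize (Hp tau Ht). simpl. lra.
        - exists 1; split; [lra|]. intros; simpl; auto. }
      destruct Hd2 as [d2 [Hd2 Hl2]].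
      apply (Hext (Rmin d1 d2)). apply Rmin_glb_lt; auto.
      intros tau H1 H2 H3.
      pose proof (Rmin_l d1 d2). pose proof (Rmin_r d1 d2).
      split.
      - assert (e < p tau) by (apply Hl1; lra).
        apply Rbar_le_trans with (Finite e); [exact (proj1 HKe)|simpl; lra].
      - apply Rbar_lt_le. apply Hl2. unfold Rabs; destruct Rcase_abs; lra. }
    assert (Hae : Rbar_lt alpha (Finite e)) by (rewrite <- Hbeta; auto).
    destruct (Rle_lt_dec s ss).
    + replace (q s) with (p s) by (pose proof (Heq s ltac:(lra)); lra). reflexivity.
    + rewrite Hbeta.
      rewrite (Cap_top (p s) alpha e Hae).
      rewrite (Cap_top (q s) alpha e Hae); auto.
      * apply (noreturn_up q G2 T ss e); auto; lra.
      * apply (noreturn_up p G1 T ss e); auto; try lra. unfold e; lra.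
Qed.

Lemma Cap_id x alpha beta : InK alpha beta x -> Cap x alpha beta = x.
Proof.
  intros [H1 H2]. unfold Cap.
  destruct (Rbar_lt_dec (Finite x) alpha) as [H3|H3].
  - exfalso. destruct alpha; simpl in *; auto; lra.
  - destruct (Rbar_lt_dec beta (Finite x)) as [H4|H4]; auto.
    exfalso. destruct beta; simpl in *; auto; lra.
Qed.

Lemma Cap_lip x y alpha beta : Rbar_lt alpha beta ->
  Rabs (Cap x alpha beta - Cap y alpha beta) <= Rabs (x - y).
Proof.
  intros Hab. unfold Cap.
  destruct (Rbar_lt_dec (Finite x) alpha) as [H1|H1];
  destruct (Rbar_lt_dec beta (Finite x)) as [H2|H2];
  destruct (Rbar_lt_dec (Finite y) alpha) as [H3|H3];
  destruct (Rbar_lt_dec beta (Finite y)) as [H4|H4];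
  destruct alpha as [a| |]; destruct beta as [c| |]; simpl in *; try tauto;
  unfold Rabs; repeat destruct Rcase_abs; lra.
Qed.

Lemma Cap_cont alpha beta x : Rbar_lt alpha beta -> continuity_pt (fun y => Cap y alpha beta) x.
Proof.
  intros Hab eps Heps. exists eps. split; auto.
  intros y [_ Hy]. simpl in *. unfold R_dist in *.
  eapply Rle_lt_trans; [apply Cap_lip; auto|]. auto.
Qed.

Lemma rhsK_closed eta kappa sigma rho b alpha beta x : b < 1 -> Rbar_lt alpha beta ->
  rhsK eta kappa sigma rho b alpha beta x =
  rhsU eta kappa sigma rho b x
  - b / (1 - b) / 2 * (eta + sigma * rho * x - (1 - b) * Cap ((eta + sigma * rho * x) / (1 - b)) alpha beta) ^ 2.
Proof.
  intros Hb Hab. unfold rhsK, rhsU, r0, r1, r2.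
  rewrite infK_closed by auto. field. lra.
Qed.

Lemma poly_cont (f : R -> R) x : (forall y, ex_derive f y) -> continuity_pt f x.
Proof. intros H. apply continuity_pt_filterlim. exact (@ex_derive_continuous R_AbsRing R_NormedModule f x (H x)). Qed.

Theorem lemma2p9 (T eta kappa sigma rho b : R) (alpha beta : Rbar)
  (B Bu : R -> R) :
  0 < T -> 0 < eta -> 0 < kappa -> 0 < sigma ->
  -1 < rho < 1 -> b < 1 -> b <> 0 ->
  Rbar_lt alpha beta ->
  solves_ODE T (rhsK eta kappa sigma rho b alpha beta) B ->
  solves_ODE T (rhsU eta kappa sigma rho b) Bu ->
  (rho = 0 \/ (Rbar_le alpha (Finite (pi_M eta b)) /\ Rbar_le (Finite (pi_M eta b)) beta)) ->
  forall t, 0 <= t <= T ->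
    pi_star T eta sigma rho b alpha beta B t
    = Cap (pi_u T eta sigma rho b Bu t) alpha beta.
Proof.
  intros HT Heta Hkappa Hsigma Hrho Hb Hb0 Hab [HB0 [HBc HBd]] [HU0 [HUc HUd]] Hcase t Ht.
  unfold pi_star, pi_u. rewrite LS by auto.
  destruct (Req_dec rho 0) as [Hr0|Hr0].
  { subst rho. f_equal. field. lra. }
  destruct Hcase as [Hcase|[HK1 HK2]]; [contradiction|].
  set (Bb := fun x => B (clampT T x)).
  set (Bub := fun x => Bu (clampT T x)).
  set (p := fun x => / (1 - b) * (eta + sigma * rho * Bb x)).
  set (q := fun x => / (1 - b) * (eta + sigma * rho * Bub x)).
  set (Binv := fun y => ((1 - b) * y - eta) / (sigma * rho)).
  set (G1 := fun y => sigma * rho / (1 - b) * rhsK eta kappa sigma rho b alpha beta (Binv y)).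
  set (G2 := fun y => sigma * rho / (1 - b) * rhsU eta kappa sigma rho b (Binv y)).
  assert (Hsr : sigma * rho <> 0) by (apply Rmult_integral_contrapositive_currified; lra).
  assert (HBinv : forall x, Binv (/ (1 - b) * (eta + sigma * rho * x)) = x).
  { intros x. unfold Binv. field. split; auto; lra. }
  assert (HBbc : forall x, continuity_pt Bb x) by (intros; apply ext_cont; auto; lra).
  assert (HBubc : forall x, continuity_pt Bub x) by (intros; apply ext_cont; auto; lra).
  assert (Hpcont : forall (f : R -> R), (forall x, continuity_pt f x) ->
            forall x, continuity_pt (fun x => / (1 - b) * (eta + sigma * rho * f x)) x).
  { intros f Hf x. apply continuity_pt_mult; [apply continuity_pt_const; intros ? ?; auto|].
    apply continuity_pt_plus; [apply continuity_pt_const; intros ? ?; auto|].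
    apply continuity_pt_mult; [apply continuity_pt_const; intros ? ?; auto|auto]. }
  assert (Hpder : forall (f : R -> R) (F : R -> R) s, is_derive f s (F (f s)) ->
            is_derive (fun x => / (1 - b) * (eta + sigma * rho * f x)) s
              (sigma * rho / (1 - b) * F (Binv (/ (1 - b) * (eta + sigma * rho * f s))))).
  { intros f F s Hd. rewrite HBinv.
    auto_derive.
    - exists (F (f s)); auto.
    - replace (Derive (fun x : R => f x) s) with (F (f s)) by (symmetry; apply is_derive_unique; exact Hd).
      field. lra. }
  assert (HG2c : forall x, continuity_pt G2 x).
  { intros x. apply poly_cont. intros y. unfold G2, rhsU, Binv. auto_derive. auto. }
  assert (HG1e : forall y, G1 y = G2 y - sigma * rho / (1 - b) * (b / (1 - b) / 2) *
                    ((1 - b) * y - (1 - b) * Cap y alpha beta) ^ 2).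
  { intros y. unfold G1, G2. rewrite rhsK_closed by auto.
    replace (eta + sigma * rho * Binv y) with ((1 - b) * y) by (unfold Binv; field; split; auto; lra).
    replace ((1 - b) * y / (1 - b)) with y by (field; lra). ring. }
  assert (HG1c : forall x, continuity_pt G1 x).
  { intros x. apply continuity_pt_ext with
      (f := fun y => G2 y - sigma * rho / (1 - b) * (b / (1 - b) / 2) *
                    ((1 - b) * y - (1 - b) * Cap y alpha beta) ^ 2).
    { intros y; rewrite HG1e; auto. }
    apply continuity_pt_minus; auto.
    apply continuity_pt_mult; [apply continuity_pt_const; intros ? ?; auto|].
    apply (continuity_pt_comp (fun y => (1 - b) * y - (1 - b) * Cap y alpha beta) (fun z => z ^ 2) x).
    2: apply poly_cont; intros; auto_derive; auto.
    apply continuity_pt_minus.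
    - apply continuity_pt_mult; [apply continuity_pt_const; intros ? ?; auto|].
      apply derivable_continuous_pt, derivable_pt_id.
    - apply continuity_pt_mult; [apply continuity_pt_const; intros ? ?; auto|].
      apply Cap_cont; auto. }
  assert (Hmain : forall s, 0 <= s <= T -> Cap (p s) alpha beta = Cap (q s) alpha beta).
  { apply (AT T alpha beta G1 G2 p q
             (r1 eta kappa sigma rho b - r2 sigma rho b * eta / (sigma * rho))
             (r2 sigma rho b * (1 - b) / (2 * (sigma * rho)))); auto.
    - intros; apply Hpcont; auto.
    - intros; apply Hpcont; auto.
    - intros s Hs. apply Hpder. apply ext_deriv; auto.
      unfold Bb. rewrite clamp_id by lra. apply HBd; auto.
    - intros s Hs. apply Hpder. apply ext_deriv; auto.
      unfold Bub. rewrite clamp_id by lra. apply HUd; auto.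
    - intros x Hx. rewrite HG1e. rewrite Cap_id by auto. ring.
    - intros x y. unfold G2, rhsU, Binv, r0, r1, r2. field. split; auto; lra.
    - unfold p, q, Bb, Bub. rewrite clamp_id by lra. rewrite HB0, HU0. reflexivity.
    - unfold p, Bb. rewrite clamp_id by lra. rewrite HB0.
      replace (/ (1 - b) * (eta + sigma * rho * 0)) with (pi_M eta b) by (unfold pi_M; field; lra).
      split; auto.
    - unfold G2, p, Bb. rewrite HBinv. rewrite clamp_id by lra. rewrite HB0.
      unfold rhsU, r0, r1, r2.
      replace (sigma * rho / (1 - b) *
        (- (- (b / (2 * (1 - b))) * eta ^ 2) + (b / (1 - b) * eta * sigma * rho - kappa) * 0 +
         / 2 * (sigma ^ 2 * (1 + b / (1 - b) * rho ^ 2)) * 0 ^ 2))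
        with ((sigma * rho * b * eta ^ 2) * / (2 * (1 - b) ^ 2)) by (field; lra).
      apply Rmult_integral_contrapositive_currified.
      + repeat apply Rmult_integral_contrapositive_currified; auto; try lra.
        all: try (apply pow_nonzero; lra).
      + apply Rinv_neq_0_compat. apply Rmult_integral_contrapositive_currified; [lra|].
        apply pow_nonzero; lra. }
  specialize (Hmain (T - t) ltac:(lra)).
  unfold p, q, Bb, Bub in Hmain. rewrite clamp_id in Hmain by lra.
  rewrite <- Hmain. f_equal. field. lra.
Qed.
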